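(* Let $N\ge1$, $n\ge1$, let $b$ be a positive integer, and let $\omega_*$, $\langle\cdot,\cdot\rangle_{b,N}$ and $\langle\!\langle\cdot,\cdot\rangle\!\rangle_{b,N}$ be as in the context. Then for all $f,g\in F_{N,n}$, $$\langle f,g\rangle_{b,N}=\langle\!\langle\omega_*(f),\omega_*(g)\rangle\!\rangle_{b,N}.$$
   Context: For $k\in\mathbb Z$, $\underline{k}\in\{1,\dots,N\}$, $\overline{k}\in\mathbb Z$ unique with $k=\underline{k}-N\overline{k}$. $V=\mathbb C^N$ with basis $v_1,\dots,v_N$. $K_{ij}$ swaps $z_i,z_j$, $P_{ij}$ swaps factors $i,j$ of $V^{\otimes n}$; $F_{N,n}=\{f\in\mathbb C[z_1^{\pm1},\dots,z_n^{\pm1}]\otimes V^{\otimes n}:K_{ij}f=-P_{ij}f\}$ with basis $\hat u_k=\sum_{w\in S_n}\mathrm{sign}(w)z_1^{\overline{k_{w(1)}}}\cdots z_n^{\overline{k_{w(n)}}}\otimes v_{\underline{k_{w(1)}}}\otimes\cdots\otimes v_{\underline{k_{w(n)}}}$, $k_1>\dots>k_n$. $\hat a_k=\sum_{w\in S_n}\mathrm{sign}(w)x_{w(1)}^{k_1}\cdots x_{w(n)}^{k_n}$; $\omega_*$ is the linear isomorphism from $F_{N,n}$ onto skew-symmetric Laurent polynomials in $x$ with $\omega_*(\hat u_k)=\hat a_k$ ($k_1>\dots>k_n$). Scalar products. On $\mathbb C[z^{\pm1}]\otimes V^{\otimes n}$: $\langle f\otimes u,g\otimes v\rangle'_{b,N}=\frac1{n!}\prod_j\oint\frac{dw_j}{2\pi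 iw_j}\prod_{i\ne j}(1-w_iw_j^{-1})^b\,\bar f(w^{-1})g(w)\cdot\langle u,v\rangle_N$ (unit circles; $\bar f$ has conjugated coefficients; $\langle\cdot,\cdot\rangle_N$ makes the tensor monomials $v_{a_1}\otimes\cdots\otimes v_{a_n}$ orthonormal), extended sesquilinearly; $\langle\cdot,\cdot\rangle_{b,N}$ is its restriction to $F_{N,n}$. For Laurent polynomials $f,g$ in $x$: $f^*(x)=\bar f(x_1^{-1},\dots,x_n^{-1})$, $[h]_1$ is the constant term, $\nabla(b,N)=\prod_{1\le i\ne j\le n}(1-x_i^Nx_j^{-N})^b$, and $\langle\!\langle f,g\rangle\!\rangle_{b,N}=\frac1{n!}[\nabla(b,N)f^*g]_1$. *)

(* Defs.v *)
From HB Require Import structures.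
From mathcomp Require Import all_boot all_order all_algebra all_fingroup.
From mathcomp Require Import finmap.
From mathcomp Require Import monalg.

Set Implicit Arguments.
Unset Strict Implicit.
Unset Printing Implicit Defensive.

Import Order.TTheory GRing.Theory Num.Theory.
Local Open Scope ring_scope.

Section Defs.
Variable C : numClosedFieldType.

Definition Exps (n : nat) := {ffun 'I_n -> int}.
Definition LP (n : nat) := {malg C[Exps n]}.

Definition lmul n (p q : LP n) : LP n :=
  \sum_(u <- msupp p) \sum_(v <- msupp q) << p@_u * q@_v *g (u + v) >>.
Definition lone n : LP n := << (0 : Exps n) >>.
Definition lpow n (p : LP n) (b : nat) : LP n := iter b (lmul p) (lone n).

Definition lstar n (p : LP n) : LP n :=
  \sum_(u <- msupp p) << (p@_u)^* *g (- u) >>.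

Definition cterm n (p : LP n) : C := p@_(0 : Exps n).

Definition eij n (N : nat) (i j : 'I_n) : Exps n :=
  [ffun k => (N%:Z * ((k == i)%:Z - (k == j)%:Z))%R].

Definition nabla n (b N : nat) : LP n :=
  \big[@lmul n/lone n]_(i : 'I_n) \big[@lmul n/lone n]_(j : 'I_n | i != j)
     lpow (lone n - << eij N i j >>) b.

Definition sp_x n (b N : nat) (f g : LP n) : C :=
  (n`!%:R)^-1 * cterm (lmul (lmul (nabla n b N) (lstar f)) g).

(* Normalized torus integral prod_j oint dw_j/(2 pi i w_j) of a Laurent
   polynomial over the unit circles: the constant term. *)
Definition torus_int n (p : LP n) : C := cterm p.

(* ---- C[z^{+-1}] (x) V^{(x)n}, V = C^N with basis v_1..v_N, where
   v_{a+1} is indexed by a : 'I_N; basis z^m (x) v_{a_1} (x)...(x) v_{a_n}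
   indexed by (m, a). ---- *)
Definition TIdx (N n : nat) := (Exps n * {ffun 'I_n -> 'I_N})%type.
Definition TV (N n : nat) := {malg C[TIdx N n]}.

Definition Kop N n (i j : 'I_n) (f : TV N n) : TV N n :=
  \sum_(k <- msupp f)
     << f@_k *g ([ffun l => k.1 (tperm i j l)], k.2) >>.
Definition Pop N n (i j : 'I_n) (f : TV N n) : TV N n :=
  \sum_(k <- msupp f)
     << f@_k *g (k.1, [ffun l => k.2 (tperm i j l)]) >>.

Definition inF N n (f : TV N n) : Prop :=
  forall i j : 'I_n, i != j -> Kop i j f = - Pop i j f.

Definition tcomp N n (f : TV N n) (a : {ffun 'I_n -> 'I_N}) : LP n :=
  \sum_(k <- msupp f | k.2 == a) << f@_k *g k.1 >>.

(* <f,g>'_{b,N}: sesquilinear extension of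
   <f (x) u, g (x) v>' = 1/n! oint prod_{i<>j}(1-w_i/w_j)^b \bar f(w^-1) g(w) <u,v>_N,
   with <.,.>_N making the v_a orthonormal. *)
Definition sp_z N n (b : nat) (f g : TV N n) : C :=
  (n`!%:R)^-1 * \sum_(a : {ffun 'I_n -> 'I_N})
     torus_int (lmul (lmul (nabla n b 1) (lstar (tcomp f a))) (tcomp g a)).

Lemma under_lt (N : nat) (hN : (0 < N)%N) (k : int) :
  (`|((k - 1) %% N%:Z)%Z|%N < N)%N.
Proof.
have hN' : (N%:Z != 0) by rewrite eqz_nat -lt0n.
have h0 := modz_ge0 (k - 1) hN'.
have h1 : ((k - 1) %% N%:Z)%Z < N%:Z.
  by rewrite -[X in _ < X]gtr0_norm ?ltz_mod // ltz_nat.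
rewrite -ltz_nat gez0_abs //.
Qed.

(* underline{k} = uidx k + 1, uidx k : 'I_N *)
Definition uidx (N : nat) (hN : (0 < N)%N) (k : int) : 'I_N :=
  Ordinal (under_lt hN k).
(* overline{k}, so that k = underline{k} - N * overline{k} *)
Definition over (N : nat) (k : int) : int := - ((k - 1) %/ N%:Z)%Z.

Definition strictly_decr n (k : {ffun 'I_n -> int}) : Prop :=
  forall i j : 'I_n, (i < j)%N -> k j < k i.

Definition uhat N n (hN : (0 < N)%N) (k : {ffun 'I_n -> int}) : TV N n :=
  \sum_(w : 'S_n) ((-1) ^+ odd_perm w) *:
     << ([ffun i => over N (k (w i))], [ffun i => uidx hN (k (w i))]) >>.

Definition ahat n (k : {ffun 'I_n -> int}) : LP n :=
  \sum_(w : 'S_n) ((-1) ^+ odd_perm w) *: << [ffun j => k ((w^-1)%g j)] >>.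

End Defs.

(* Main.v *)
Require Import Defs.
From HB Require Import structures.
From mathcomp Require Import all_boot all_order all_algebra all_fingroup.
From mathcomp Require Import finmap.
From mathcomp Require Import monalg.
From mathcomp Require Import zify ring.
Import Order.TTheory GRing.Theory Num.Theory.
Set Implicit Arguments.
Unset Strict Implicit.
Unset Printing Implicit Defensive.
Local Open Scope ring_scope.

Section Gen.
Variable C : numClosedFieldType.

Section K.
Variable K : choiceType.
Implicit Types (g : {malg C[K]}).

Lemma sum_pred1F g (F : K -> C) y :
  \sum_(k <- msupp g) F k *+ (k == y) = if y \in msupp g then F y else 0.
Proof.
case: ifP => hy.
  rewrite (bigD1_seq y hy (fset_uniq _)) /= eqxx mulr1n.
  rewrite big1 ?addr0 // => k /negbTE ->; by rewrite mulr0n.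
rewrite big_seq big1 // => k hk; case: eqP hk => [->|]; first by rewrite hy.
by rewrite mulr0n.
Qed.

Lemma sum_pred1 g y : \sum_(k <- msupp g) g@_k *+ (k == y) = g@_y.
Proof. by rewrite sum_pred1F; case: ifP => // /negbT /mcoeff_outdom ->. Qed.

Lemma sum_supp_incl g (d : {fset K}) (F : K -> C) :
  (msupp g `<=` d)%fset -> (forall k, g@_k = 0 -> F k = 0) ->
  \sum_(k <- msupp g) F k = \sum_(k <- d) F k.
Proof.
move=> hd hF; apply: big_fset_incl => // x _ hx; apply: hF.
exact: mcoeff_outdom.
Qed.

Lemma sum_imfset (K' : choiceType) (h : K -> K') (A : {fset K}) (F : K' -> C) :
  injective h ->
  \sum_(j <- [fset h x | x in A]%fset) F j = \sum_(x <- A) F (h x).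
Proof.
move=> hi; rewrite big_imfset /=; last by move=> ????; exact: hi.
done.
Qed.

Definition hm (K' : choiceType) (h : K -> K') g : {malg C[K']} :=
  \sum_(k <- msupp g) << g@_k *g h k >>.

Lemma hm_coef (K' : choiceType) (h : K -> K') g x :
  (hm h g)@_x = \sum_(k <- msupp g) g@_k *+ (h k == x).
Proof.
rewrite /hm raddf_sum /=; apply: eq_bigr => k _; by rewrite mcoeffU.
Qed.

Lemma hm_coef_bij (K' : choiceType) (h : K -> K') (h' : K' -> K) g x :
  cancel h h' -> cancel h' h -> (hm h g)@_x = g@_(h' x).
Proof.
move=> c1 c2; rewrite hm_coef -sum_pred1; apply: eq_bigr => k _.
have -> : (h k == x) = (k == h' x) by apply/eqP/eqP => [<-|->]; rewrite ?c1 ?c2.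
by [].
Qed.

Lemma msupp_hm (K' : choiceType) (h : K -> K') g :
  (msupp (hm h g) `<=` [fset h x | x in msupp g])%fset.
Proof.
apply/fsubsetP => x; rewrite -mcoeff_neq0 hm_coef => hx.
have [k hk hkx] : exists2 k, k \in msupp g & h k == x.
  case: (boolP (has (fun k => h k == x) (msupp g))) => [/hasP //|/hasPn hn].
  move/eqP: hx; case.
  by rewrite big_seq big1 // => k /hn /= /negbTE ->.
by apply/imfsetP; exists k => //; rewrite (eqP hkx).
Qed.

End K.

Section LPsec.
Variable n : nat.
Local Notation E := (Exps n).
Local Notation L := (LP C n).
Implicit Types (p q r : L).

Lemma lmul_coef_gen p q x :
  (lmul p q)@_x = \sum_(u <- msupp p) \sum_(v <- msupp q) (p@_u * q@_v) *+ (u + v == x).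
Proof.
rewrite /lmul raddf_sum /=; apply: eq_bigr => u _.
rewrite raddf_sum /=; apply: eq_bigr => v _; by rewrite mcoeffU.
Qed.

Lemma lmul_coefL p q x :
  (lmul p q)@_x = \sum_(u <- msupp p) p@_u * q@_(x - u).
Proof.
rewrite lmul_coef_gen; apply: eq_bigr => u _.
have h : forall v, (u + v == x) = (v == x - u).
  by move=> v; apply/eqP/eqP => [<-|->]; rewrite ?(addrC u) ?addrK ?subrK.
under eq_bigr do rewrite h.
rewrite (sum_pred1F q (fun v => p@_u * q@_v)).
by case: ifP => // /negbT /mcoeff_outdom ->; rewrite mulr0.
Qed.

Lemma lmul_coefR p q x :
  (lmul p q)@_x = \sum_(v <- msupp q) p@_(x - v) * q@_v.
Proof.
rewrite lmul_coef_gen exchange_big /=; apply: eq_bigr => v _.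
have h : forall u, (u + v == x) = (u == x - v).
  by move=> u; apply/eqP/eqP => [<-|->]; rewrite ?addrK ?subrK.
under eq_bigr do rewrite h.
rewrite (sum_pred1F p (fun u => p@_u * q@_v)).
by case: ifP => // /negbT /mcoeff_outdom ->; rewrite mul0r.
Qed.

Lemma lmulC : commutative (@lmul C n).
Proof.
move=> p q; apply/malgP => x; rewrite lmul_coefL lmul_coefR.
by apply: eq_bigr => u _; rewrite mulrC.
Qed.

Lemma lmulA : associative (@lmul C n).
Proof.
move=> p q r; apply/malgP => x; rewrite [RHS]lmul_coefR [LHS]lmul_coefL.
under [RHS]eq_bigr do rewrite lmul_coefL mulr_suml.
rewrite [RHS]exchange_big /=; apply: eq_bigr => u _.
rewrite lmul_coefR mulr_sumr; apply: eq_bigr => w _.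
by rewrite mulrA addrAC.
Qed.

Lemma msupp_lone : msupp (lone C n) = [fset (0 : E)]%fset.
Proof. by rewrite /lone msuppU oner_eq0. Qed.

Lemma lmul1 : left_id (lone C n) (@lmul C n).
Proof.
move=> p; apply/malgP => x; rewrite lmul_coefL msupp_lone big_seq_fset1.
by rewrite /lone mcoeffUU mul1r subr0.
Qed.

End LPsec.

HB.instance Definition _ n := Monoid.isComLaw.Build (LP C n) (@lone C n) (@lmul C n)
  (@lmulA n) (@lmulC n) (@lmul1 n).


Lemma hmU (K K' : choiceType) (h : K -> K') (c : C) (e : K) :
  hm h << c *g e >> = << c *g h e >>.
Proof.
rewrite /hm msuppU; case: eqP => [->|_]; first by rewrite big_nil monalgU0.
by rewrite big_seq_fset1 mcoeffUU.
Qed.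

Section LP2.
Variable n : nat.
Local Notation E := (Exps n).
Local Notation L := (LP C n).
Implicit Types (p q r P : L).

Lemma lstar_coef p x : (lstar p)@_x = (p@_(-x))^*.
Proof.
rewrite /lstar raddf_sum /=.
under eq_bigr do rewrite mcoeffU eqr_oppLR.
rewrite (sum_pred1F p (fun u => (p@_u)^*)).
by case: ifP => // /negbT /mcoeff_outdom ->; rewrite conjC0.
Qed.

Lemma msupp_lstar p : (msupp (lstar p) `<=` [fset - u | u in msupp p])%fset.
Proof.
apply/fsubsetP => x; rewrite -mcoeff_neq0 lstar_coef => hx.
apply/imfsetP; exists (- x); last by rewrite opprK.
by rewrite /= -mcoeff_neq0; apply: contra hx => /eqP ->; rewrite conjC0.
Qed.

Lemma pair_formula P p q :
  cterm (lmul (lmul P (lstar p)) q) =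
  \sum_(v <- msupp q) \sum_(u <- msupp p) P@_(u - v) * (p@_u)^* * q@_v.
Proof.
rewrite /cterm lmul_coefR; apply: eq_bigr => v _.
rewrite lmul_coefR mulr_suml.
rewrite (sum_supp_incl (msupp_lstar p)); last first.
  by move=> k ->; rewrite mulr0 mul0r.
rewrite sum_imfset; last exact: oppr_inj.
apply: eq_bigr => u _; rewrite lstar_coef opprK.
by rewrite sub0r addrC.
Qed.

Definition linv p : L := hm (fun u : E => - u) p.

Lemma linv_coef p x : (linv p)@_x = p@_(-x).
Proof. by apply: hm_coef_bij; exact: opprK. Qed.

Lemma linv_lmul p q : linv (lmul p q) = lmul (linv p) (linv q).
Proof.
apply/malgP => x; rewrite linv_coef !lmul_coefL.
rewrite (sum_supp_incl (msupp_hm _ p)); last first.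
  by move=> k ->; rewrite mul0r.
rewrite sum_imfset; last exact: oppr_inj.
apply: eq_bigr => u _; rewrite !linv_coef opprK; congr (_ * _@__).
by rewrite opprD.
Qed.

Lemma linvU c e : linv << c *g e >> = << c *g - e >>.
Proof. exact: hmU. Qed.

Lemma linv_lone : linv (lone C n) = lone C n.
Proof. by rewrite /lone linvU oppr0. Qed.

Lemma linvB p q : linv (p - q) = linv p - linv q.
Proof. by apply/malgP => x; rewrite mcoeffB !linv_coef mcoeffB. Qed.

Lemma lpow_morph (f : L -> L) p b :
  (forall p q, f (lmul p q) = lmul (f p) (f q)) -> f (lone C n) = lone C n ->
  f (lpow p b) = lpow (f p) b.
Proof.
move=> fM f1; elim: b => [|b IH] //=; by rewrite fM IH.
Qed.

Lemma nabla_morph (f : L -> L) b N :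
  (forall p q, f (lmul p q) = lmul (f p) (f q)) -> f (lone C n) = lone C n ->
  f (nabla C n b N) = \big[@lmul C n/lone C n]_(i : 'I_n)
     \big[@lmul C n/lone C n]_(j : 'I_n | i != j) lpow (f (lone C n - << eij N i j >>)) b.
Proof.
move=> fM f1; rewrite /nabla (big_morph f fM f1); apply: eq_bigr => i _.
rewrite (big_morph f fM f1); apply: eq_bigr => j _.
exact: lpow_morph.
Qed.

Lemma eijN N (i j : 'I_n) : - eij N i j = eij N j i.
Proof.
apply/ffunP => k; rewrite !ffunE; by rewrite -mulrN opprB.
Qed.

Lemma linv_fac (e : E) : linv (lone C n - << e >>) = lone C n - << - e >>.
Proof. by rewrite linvB linv_lone linvU. Qed.

Lemma linv_nabla b N : linv (nabla C n b N) = nabla C n b N.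
Proof.
rewrite (nabla_morph _ _ linv_lmul linv_lone).
transitivity (\big[@lmul C n/lone C n]_(i : 'I_n)
     \big[@lmul C n/lone C n]_(j : 'I_n) (if i != j then
        lpow (lone C n - << eij N j i >>) b else lone C n)).
  apply: eq_bigr => i _; rewrite [LHS]big_mkcond; apply: eq_bigr => j _.
  case: ifP => [_|_]; last by [].
  by rewrite linv_fac eijN.
rewrite exchange_big /=; apply eq_bigr => i _.
rewrite [RHS]big_mkcond; apply: eq_bigr => j _.
by rewrite eq_sym.
Qed.

Lemma nabla_sym b N u : (nabla C n b N)@_(- u) = (nabla C n b N)@_u.
Proof. by rewrite -linv_coef linv_nabla. Qed.

End LP2.

Section Dil.
Variables (n N : nat).
Hypothesis hN : (0 < N)%N.
Local Notation E := (Exps n).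
Local Notation L := (LP C n).
Implicit Types (p q r P : L).

Definition dm (u : E) : E := [ffun i => N%:Z * u i].
Definition divN (z : E) : E := [ffun i => (z i %/ N%:Z)%Z].

Lemma Nz0 : (N%:Z != 0).
Proof. by rewrite eqz_nat -lt0n. Qed.

Lemma divN_dm u : divN (dm u) = u.
Proof. by apply/ffunP => i; rewrite !ffunE mulKz // Nz0. Qed.

Lemma dm_inj : injective dm.
Proof. by move=> u v h; rewrite -(divN_dm u) h divN_dm. Qed.

Lemma dmB u v : dm (u - v) = dm u - dm v.
Proof. by apply/ffunP => i; rewrite !ffunE mulrBr. Qed.

Lemma dmD u v : dm (u + v) = dm u + dm v.
Proof. by apply/ffunP => i; rewrite !ffunE mulrDr. Qed.

Lemma dm_img z y : z = dm y -> z == dm (divN z).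
Proof. by move=> ->; rewrite divN_dm. Qed.

Definition dil p : L := hm dm p.

Lemma dil_coef p z :
  (dil p)@_z = if z == dm (divN z) then p@_(divN z) else 0.
Proof.
rewrite hm_coef; case: ifP => hz.
  rewrite -sum_pred1; apply: eq_bigr => u _.
  have -> : (dm u == z) = (u == divN z).
    by rewrite {1}(eqP hz); apply/eqP/eqP => [/dm_inj|->].
  by [].
rewrite big1 // => u _; case: eqP => [hu|]; last by rewrite mulr0n.
by move: hz; rewrite (dm_img (esym hu)).
Qed.

Lemma dil_coef_dm p w : (dil p)@_(dm w) = p@_w.
Proof. by rewrite dil_coef divN_dm eqxx. Qed.

Lemma dil_coef_out p z : ~~ (z == dm (divN z)) -> (dil p)@_z = 0.
Proof. by rewrite dil_coef => /negbTE ->. Qed.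

Lemma dil_lmul p q : dil (lmul p q) = lmul (dil p) (dil q).
Proof.
apply/malgP => z; rewrite [RHS]lmul_coefR.
rewrite (sum_supp_incl (msupp_hm _ q)); last by move=> k ->; rewrite mulr0.
rewrite sum_imfset; last exact: dm_inj.
case: (boolP (z == dm (divN z))) => hz.
  rewrite (eqP hz) dil_coef_dm lmul_coefR; apply: eq_bigr => v _.
  by rewrite -dmB !dil_coef_dm.
rewrite dil_coef_out // big1 // => v _; rewrite dil_coef_out ?mul0r //.
apply: contra hz => /eqP h; apply: (@dm_img _ (divN (z - dm v) + v)).
by rewrite dmD -h subrK.
Qed.

Lemma dil_lone : dil (lone C n) = lone C n.
Proof.
rewrite /dil /lone hmU; congr << _ *g _ >>; by apply/ffunP => i; rewrite !ffunE mulr0.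
Qed.

Lemma dilB p q : dil (p - q) = dil p - dil q.
Proof.
apply/malgP => z; rewrite mcoeffB !dil_coef; case: ifP => _ //.
by rewrite mcoeffB. by rewrite subr0.
Qed.

Lemma dil_fac (e : E) : dil (lone C n - << e >>) = lone C n - << dm e >>.
Proof. by rewrite dilB dil_lone /dil hmU. Qed.

Lemma dil_nabla b : dil (nabla C n b 1) = nabla C n b N.
Proof.
rewrite (nabla_morph _ _ dil_lmul dil_lone) /nabla.
apply: eq_bigr => i _; apply: eq_bigr => j _.
rewrite dil_fac.
have -> : dm (eij 1 i j) = eij N i j by apply/ffunP => k; rewrite !ffunE mul1r.
by [].
Qed.

End Dil.

Lemma small_diff (M a a' : nat) (t : int) : (a < M)%N -> (a' < M)%N ->
  a%:Z - a'%:Z = M%:Z * t -> a = a'.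
Proof. move=> *. case: (ltrgtP t 0) => ht. nia. nia. subst t. lia. Qed.

Section TVsec.
Variables (N n : nat).
Hypothesis hN : (0 < N)%N.
Local Notation E := (Exps n).
Local Notation L := (LP C n).
Local Notation T := (TIdx N n).
Local Notation V := (TV C N n).

Definition rho (x : T) : E := [ffun i => (x.2 i : nat)%:Z + 1 - N%:Z * x.1 i].
Definition tau (k : E) : T :=
  ([ffun i => Defs.over N (k i)], [ffun i => uidx hN (k i)]).

Lemma uidx_val (k : int) : ((uidx hN k : nat)%:Z = ((k - 1) %% N%:Z)%Z).
Proof.
rewrite /uidx /= gez0_abs // modz_ge0 //; by rewrite eqz_nat -lt0n.
Qed.

Lemma rho_tau k : rho (tau k) = k.
Proof.
apply/ffunP => i; rewrite !ffunE uidx_val /Defs.over.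
rewrite mulrN opprK [in RHS](_ : k i = (k i - 1) + 1); last by rewrite subrK.
rewrite {3}(divz_eq (k i - 1) N%:Z); ring.
Qed.

Lemma tau_rho x : tau (rho x) = x.
Proof.
case: x => m a; rewrite /tau /=; congr (_, _); apply/ffunP => i; rewrite !ffunE /=.
  rewrite /Defs.over (_ : _ - 1 = (- m i) * N%:Z + (a i : nat)%:Z); last by ring.
  rewrite divzMDl; last by rewrite eqz_nat -lt0n.
  rewrite divz_small ?addr0 ?opprK // absz_nat.
  by apply/andP; split => //; rewrite ltz_nat ltn_ord.
apply: val_inj => /=; apply/eqP; rewrite -eqz_nat; apply/eqP.
rewrite uidx_val (_ : _ - 1 = (- m i) * N%:Z + (a i : nat)%:Z); last by ring.
rewrite modzMDl modz_small //.
by apply/andP; split => //; rewrite ltz_nat ltn_ord.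
Qed.

Lemma rho_inj : injective rho.
Proof. exact: can_inj tau_rho. Qed.

Definition om (f : V) : L := hm rho f.

Lemma om_coef f k : (om f)@_k = f@_(tau k).
Proof. apply: hm_coef_bij; [exact: tau_rho | exact: rho_tau]. Qed.

Lemma tcomp_coef (f : V) a m : (tcomp f a)@_m = f@_(m, a).
Proof.
rewrite /tcomp raddf_sum /= -sum_pred1 big_mkcond /=; apply: eq_bigr => k _.
rewrite mcoeffU; case: k => m' a' /=; rewrite xpair_eqE.
by case: (a' == a); rewrite ?andbT ?andbF ?mulr0n.
Qed.

Definition spz_formula b (f g : V) : C :=
  (n`!%:R)^-1 * \sum_(y <- msupp g) \sum_(x <- msupp f)
     (if x.2 == y.2 then (nabla C n b 1)@_(x.1 - y.1) else 0) * (f@_x)^* * g@_y.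

Lemma tcomp_sum (f : V) a (F : E -> C) :
  (forall m, f@_(m, a) = 0 -> F m = 0) ->
  \sum_(u <- msupp (tcomp f a)) F u = \sum_(x <- msupp f | x.2 == a) F x.1.
Proof.
move=> hF.
have hinc : (msupp (tcomp f a) `<=`
    [fset x.1 | x in [fset x in msupp f | x.2 == a]%fset])%fset.
  apply/fsubsetP => m; rewrite -mcoeff_neq0 tcomp_coef => hm.
  apply/imfsetP; exists (m, a) => //=.
  by rewrite !inE /= eqxx andbT -mcoeff_neq0.
rewrite (sum_supp_incl hinc); last by move=> m; rewrite tcomp_coef; exact: hF.
rewrite big_imfset /=; last first.
  move=> [m1 a1] [m2 a2]; rewrite !inE /= => /andP[_ /eqP->] /andP[_ /eqP->].
  by move=> ->.
rewrite big_fset /=; apply: perm_big; apply: uniq_perm.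
- exact: fset_uniq.
- exact: fset_uniq.
- by [].
Qed.

Lemma spz_eq b (f g : V) : sp_z b f g = spz_formula b f g.
Proof.
rewrite /sp_z /spz_formula /torus_int; congr (_ * _).
under eq_bigr do rewrite pair_formula.
transitivity (\sum_(a : {ffun 'I_n -> 'I_N}) \sum_(y <- msupp g | y.2 == a)
   \sum_(x <- msupp f | x.2 == a)
   (nabla C n b 1)@_(x.1 - y.1) * (f@_x)^* * g@_y).
  apply: eq_bigr => a _.
  rewrite tcomp_sum; last first.
    by move=> m h; rewrite big1 // => u _; rewrite !tcomp_coef h mulr0.
  apply: eq_bigr => y /eqP hy.
  rewrite tcomp_sum; last by move=> m h; rewrite !tcomp_coef h conjC0 mulr0 mul0r.
  apply: eq_bigr => x /eqP hx.
  rewrite !tcomp_coef; congr (_ * (f@__)^* * g@__).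
    by case: x hx => ? ? /= ->.
  by case: y hy => ? ? /= ->.
under eq_bigr do rewrite big_mkcond /=.
rewrite exchange_big /=; apply: eq_bigr => y _.
rewrite -big_mkcond /= (big_pred1 y.2); last by move=> a; rewrite eq_sym.
rewrite big_mkcond /=; apply: eq_bigr => x _.
by case: ifP => _; rewrite ?mul0r.
Qed.


Lemma spx_eq b (f g : V) :
  sp_x b N (om f) (om g) = (n`!%:R)^-1 * \sum_(y <- msupp g) \sum_(x <- msupp f)
     (nabla C n b N)@_(rho x - rho y) * (f@_x)^* * g@_y.
Proof.
rewrite /sp_x pair_formula; congr (_ * _).
rewrite (sum_supp_incl (msupp_hm rho g)); last first.
  by move=> v h; rewrite big1 // => u _; rewrite h mulr0.
rewrite sum_imfset; last exact: rho_inj.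
apply: eq_bigr => y _.
rewrite (sum_supp_incl (msupp_hm rho f)); last first.
  by move=> u h; rewrite h conjC0 mulr0 mul0r.
rewrite sum_imfset; last exact: rho_inj.
apply: eq_bigr => x _.
by rewrite !om_coef !tau_rho.
Qed.

Lemma nabla_rho b (x y : T) :
  (nabla C n b N)@_(rho x - rho y) =
  if x.2 == y.2 then (nabla C n b 1)@_(x.1 - y.1) else 0.
Proof.
rewrite -(@dil_nabla n N hN b); case: ifP => h.
  have -> : rho x - rho y = dm N (y.1 - x.1).
    apply/ffunP => i; rewrite !ffunE (eqP h); ring.
  rewrite dil_coef_dm //.
  have -> : y.1 - x.1 = - (x.1 - y.1) :> E by rewrite opprB.
  by rewrite nabla_sym.
apply: (@dil_coef_out n N hN); apply/negP => /eqP hz.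
have /existsP [i hi] : [exists i, x.2 i != y.2 i].
  rewrite -negb_forall; apply: contra (negbT h) => /forallP hall.
  by apply/eqP/ffunP => i; apply/eqP/hall.
have := congr1 (fun u : E => u i) hz; rewrite /= !ffunE => hi2.
have : (x.2 i : nat) = y.2 i.
  apply: (@small_diff N _ _ ((divN N (rho x - rho y)) i + x.1 i - y.1 i)) => //.
  rewrite !ffunE; move: hi2; set q := (_ %/ _)%Z => hi2.
  clearbody q; nia.
by move/val_inj => he; rewrite he eqxx in hi.
Qed.

Lemma sp_main b (f g : V) : sp_z b f g = sp_x b N (om f) (om g).
Proof.
rewrite spz_eq spx_eq /spz_formula; congr (_ * _).
apply: eq_bigr => y _; apply: eq_bigr => x _.
by rewrite nabla_rho.
Qed.


Definition comp (k : E) (s : 'S_n) : E := [ffun i => k (s i)].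
Definition sgn (s : 'S_n) : C := (-1) ^+ odd_perm s.

Lemma compM k (s t : 'S_n) : comp k (s * t)%g = comp (comp k t) s.
Proof. by apply/ffunP => i; rewrite !ffunE permM. Qed.

Lemma comp1 k : comp k 1%g = k.
Proof. by apply/ffunP => i; rewrite !ffunE perm1. Qed.

Lemma sgnM_tperm (i j : 'I_n) s : i != j -> sgn (tperm i j * s)%g = - sgn s.
Proof. by move=> hij; rewrite /sgn odd_mul_tperm hij signr_addb expr1 mulN1r. Qed.

Lemma sgnV s : sgn (s^-1)%g = sgn s.
Proof. by rewrite /sgn odd_permV. Qed.

Lemma sgn_sq s : sgn s * sgn s = 1.
Proof. by rewrite /sgn -signr_addb addbb. Qed.

Lemma tau_inj : injective tau.
Proof. exact: can_inj rho_tau. Qed.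

Lemma uhat_eq k : uhat C hN k = \sum_(w : 'S_n) sgn w *: << tau (comp k w) >>.
Proof.
apply: eq_bigr => w _; congr (_ *: << _ >>).
by rewrite /tau; congr (_, _); apply/ffunP => i; rewrite !ffunE.
Qed.

Lemma uhat_coef k y :
  (uhat C hN k)@_y = \sum_(w : 'S_n) sgn w * (tau (comp k w) == y)%:R.
Proof.
rewrite uhat_eq raddf_sum /=; apply: eq_bigr => w _.
by rewrite mcoeffZ mcoeffU.
Qed.

Lemma uhat_coef_tau k mu :
  (uhat C hN k)@_(tau mu) = \sum_(w : 'S_n) sgn w * (comp k w == mu)%:R.
Proof.
rewrite uhat_coef; apply: eq_bigr => w _.
have -> // : (tau (comp k w) == tau mu) = (comp k w == mu).
by apply/eqP/eqP => [/tau_inj|->].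
Qed.

Lemma ahat_coef k mu :
  (ahat C k)@_mu = \sum_(w : 'S_n) sgn w * (comp k w == mu)%:R.
Proof.
rewrite /ahat raddf_sum /= (reindex_inj invg_inj) /=; apply: eq_bigr => w _.
rewrite mcoeffZ mcoeffU -/(sgn _) sgnV.
have -> // : [ffun j => k ((w^-1)^-1 j)]%g = comp k w.
by apply/ffunP => i; rewrite !ffunE invgK.
Qed.

Lemma om_uhat k : om (uhat C hN k) = ahat C k.
Proof. by apply/malgP => mu; rewrite om_coef uhat_coef_tau ahat_coef. Qed.

Definition swz (i j : 'I_n) (x : T) : T := ([ffun l => x.1 (tperm i j l)], x.2).
Definition swv (i j : 'I_n) (x : T) : T := (x.1, [ffun l => x.2 (tperm i j l)]).

Lemma swzK i j : involutive (swz i j).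
Proof.
by case=> m a; rewrite /swz /=; congr (_, _); apply/ffunP => l; rewrite !ffunE tpermK.
Qed.

Lemma swvK i j : involutive (swv i j).
Proof.
by case=> m a; rewrite /swv /=; congr (_, _); apply/ffunP => l; rewrite !ffunE tpermK.
Qed.

Lemma Kop_coef i j (f : V) x : (Kop i j f)@_x = f@_(swz i j x).
Proof. exact: (@hm_coef_bij _ _ (swz i j) (swz i j) f x (swzK i j) (swzK i j)). Qed.

Lemma Pop_coef i j (f : V) x : (Pop i j f)@_x = f@_(swv i j x).
Proof. exact: (@hm_coef_bij _ _ (swv i j) (swv i j) f x (swvK i j) (swvK i j)). Qed.

Lemma inF_coef (f : V) :
  inF f <-> forall i j : 'I_n, i != j -> forall x, f@_(swz i j x) = - f@_(swv i j x).
Proof.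
split=> h i j hij.
  move=> x; by rewrite -Kop_coef (h i j hij) mcoeffN Pop_coef.
by apply/malgP => x; rewrite Kop_coef mcoeffN Pop_coef h.
Qed.

Lemma inF_lin c (f g : V) : inF f -> inF g -> inF (c *: f + g).
Proof.
move=> /inF_coef hf /inF_coef hg; apply/inF_coef => i j hij x.
by rewrite !mcoeffD !mcoeffZ hf // hg // opprD mulrN.
Qed.

Lemma inF0 : @inF C N n 0.
Proof. by apply/inF_coef => i j _ x; rewrite !mcoeff0 oppr0. Qed.

Lemma tau_comp_tperm i j k :
  tau (comp k (tperm i j)) = swz i j (swv i j (tau k)).
Proof.
by rewrite /tau /swz /swv /=; congr (_, _); apply/ffunP => l; rewrite !ffunE.
Qed.

Lemma swzv i j x : swz i j (swv i j x) = swv i j (swz i j x).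
Proof. by case: x. Qed.

Lemma uhat_inF (k : E) : inF (uhat C hN k).
Proof.
apply/inF_coef => i j hij x.
rewrite !uhat_coef [in RHS](reindex_inj (mulgI (tperm i j))) /=.
rewrite -sumrN; apply: eq_bigr => w _.
rewrite sgnM_tperm // mulNr opprK.
have -> // : (tau (comp k (tperm i j * w)%g) == swv i j x) = (tau (comp k w) == swz i j x).
rewrite compM tau_comp_tperm.
apply/eqP/eqP => [h|h].
  by move: h; rewrite swzv => /(can_inj (swvK i j)) <-; rewrite swzK.
by rewrite h swzv swzK.
Qed.


Lemma cf_tperm (f : V) (hf : inF f) i j mu : i != j ->
  f@_(tau (comp mu (tperm i j))) = - f@_(tau mu).
Proof.
move=> hij; rewrite tau_comp_tperm; move/inF_coef: hf => h.
by rewrite h // swvK.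
Qed.

Lemma cf_perm (f : V) (hf : inF f) mu s :
  f@_(tau (comp mu s)) = sgn s * f@_(tau mu).
Proof.
case: (prod_tpermP s) => ts -> {s}; elim: ts => [|[a b] ts IH] /=.
  by rewrite big_nil comp1 /sgn odd_perm1 mul1r.
move=> /andP [hab hts]; rewrite big_cons compM /= cf_tperm // IH //.
by rewrite sgnM_tperm // mulNr.
Qed.

Lemma cf_rep (f : V) (hf : inF f) (mu : E) (i j : 'I_n) : i != j -> mu i = mu j ->
  f@_(tau mu) = 0.
Proof.
move=> hij he.
have e : comp mu (tperm i j) = mu.
  by apply/ffunP => l; rewrite ffunE; case: tpermP => [->|->|] //.
have := cf_tperm hf mu hij; rewrite e => /eqP.
rewrite -addr_eq0 -mulr2n -mulr_natl mulf_eq0 pnatr_eq0 /= => /eqP //.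
Qed.

Definition sdb (k : E) : bool :=
  [forall i : 'I_n, forall j : 'I_n, (i < j)%N ==> (k j < k i)].

Lemma sdbP k : sdb k -> strictly_decr k.
Proof. by move=> /forallP h i j hij; move/forallP: (h i) => /(_ j); rewrite hij. Qed.

Definition rk (mu : E) (i : 'I_n) : nat := #|[set l | mu i < mu l]|.

Lemma rk_lt mu i : (rk mu i < n)%N.
Proof.
rewrite /rk -[X in (_ < X)%N]card_ord -cardsT; apply: proper_card.
rewrite properT; apply/negP => /eqP h.
have : i \in [set l | mu i < mu l] by rewrite h inE.
by rewrite inE ltxx.
Qed.

Lemma rk_anti (mu : E) (i j : 'I_n) : mu i < mu j -> (rk mu j < rk mu i)%N.
Proof.
move=> hij; apply: proper_card; apply/properP; split.
  by apply/subsetP => l; rewrite !inE => h; exact: lt_trans hij h.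
by exists j; rewrite !inE ?ltxx.
Qed.

Lemma ord_incr_id (h : 'I_n -> 'I_n) :
  (forall a b : 'I_n, (a < b)%N -> (h a < h b)%N) -> forall a, h a = a.
Proof.
move=> hinc.
have ge : forall k (a : 'I_n), (a : nat) = k -> (k <= h a)%N.
  elim=> [//|k IH] a ha.
  have hk : (k < n)%N by have := ltn_ord a; rewrite ha; lia.
  have := hinc (Ordinal hk) a; rewrite ha ltnSn => /(_ isT).
  have := IH (Ordinal hk) erefl => /= h1 h2; exact: leq_ltn_trans h1 h2.
have le : forall d (a : 'I_n), (a + d = n.-1)%N -> (h a <= a)%N.
  elim=> [|d IH] a ha.
    by have := ltn_ord (h a); lia.
  have hk : (a.+1 < n)%N by have := ltn_ord a; lia.
  have h1 := IH (Ordinal hk) (ltac:(rewrite /=; lia)).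
  have h2 := hinc a (Ordinal hk) (ltnSn _).
  rewrite /= in h1 h2; lia.
move=> a; apply: val_inj => /=.
have h1 := ge a a erefl.
have h2 := le (n.-1 - a)%N a (ltac:(have := ltn_ord a; lia)).
lia.
Qed.

Section Sort.
Variable mu : E.
Hypothesis mu_inj : injective mu.

Definition rko (i : 'I_n) : 'I_n := Ordinal (rk_lt mu i).

Lemma rko_inj : injective rko.
Proof.
move=> i j /(congr1 val) /= h.
case: (ltgtP (mu i) (mu j)) => hm.
- by have := rk_anti hm; rewrite h ltnn.
- by have := rk_anti hm; rewrite h ltnn.
- exact: mu_inj.
Qed.

Definition s0 : 'S_n := perm rko_inj.

Lemma s0_sorted : sdb (comp mu (s0^-1)%g).
Proof.
apply/forallP => i; apply/forallP => j; apply/implyP => hij; rewrite !ffunE.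
set a := (s0^-1)%g i; set b := (s0^-1)%g j.
have ra : rk mu a = i by rewrite -[in RHS](permKV s0 i) permE.
have rb : rk mu b = j by rewrite -[in RHS](permKV s0 j) permE.
case: (ltgtP (mu a) (mu b)) => hm //.
- by have := rk_anti hm; rewrite ra rb ltnNge (ltnW hij).
- have : a = b by exact: mu_inj.
  by move=> /(congr1 (rk mu)); rewrite ra rb => /eqP; rewrite (ltn_eqF hij).
Qed.

Lemma sorted_uniq (s : 'S_n) : sdb (comp mu s) -> s = (s0^-1)%g.
Proof.
move=> hs.
have hid := @ord_incr_id (fun a => s0 (s a)).
have e : forall a, s0 (s a) = a.
  apply: hid => a b hab; rewrite !permE /=; apply: rk_anti.
  by move/forallP: hs => /(_ a) /forallP /(_ b); rewrite hab !ffunE.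
by apply/permP => a; rewrite -{2}(e a) permK.
Qed.

Lemma sort_sum : \sum_(s : 'S_n) (sdb (comp mu s))%:R = 1 :> C.
Proof.
rewrite (bigD1 (s0^-1)%g) //= s0_sorted big1 ?addr0 // => s hs.
case: (boolP (sdb (comp mu s))) => h //.
by move: hs; rewrite (sorted_uniq h) eqxx.
Qed.

End Sort.

Lemma sum_seq_pred1 (X : eqType) (s : seq X) (F : X -> C) y : uniq s ->
  \sum_(k <- s) F k * (k == y)%:R = if y \in s then F y else 0.
Proof.
move=> us; case: ifP => hy.
  rewrite (bigD1_seq y hy us) /= eqxx mulr1.
  rewrite big1 ?addr0 // => k /negbTE ->; by rewrite mulr0.
rewrite big_seq big1 // => k hk; case: eqP hk => [->|]; first by rewrite hy.
by rewrite mulr0.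
Qed.

Section Span.
Variable f : V.
Hypothesis hf : inF f.

Definition S := [seq rho x | x <- msupp f & sdb (rho x)].

Lemma memS k : (k \in S) = (tau k \in msupp f) && sdb k.
Proof.
apply/mapP/andP => [[x] |[h1 h2]].
  by rewrite mem_filter => /andP [h1 h2] ->; rewrite tau_rho.
by exists (tau k); rewrite ?rho_tau // mem_filter rho_tau h1 h2.
Qed.

Lemma S_uniq : uniq S.
Proof. rewrite map_inj_uniq; [exact/filter_uniq/fset_uniq | exact: rho_inj]. Qed.

Lemma S_sdb : all sdb S.
Proof. by apply/allP => k; rewrite memS => /andP []. Qed.

Lemma comp_inv (k mu : E) (w : 'S_n) : (comp k w == mu) = (k == comp mu (w^-1)%g).
Proof.
apply/eqP/eqP => [<-|->].
  by rewrite -compM mulVg comp1.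
by rewrite -compM mulgV comp1.
Qed.

Lemma span : f = \sum_(k <- S) f@_(tau k) *: uhat C hN k.
Proof.
apply/malgP => x; rewrite -[x]tau_rho; set mu := rho x.
rewrite raddf_sum /=.
under eq_bigr do rewrite mcoeffZ uhat_coef_tau mulr_sumr.
rewrite exchange_big /=.
under eq_bigr => w _.
  under eq_bigr => k _ do rewrite comp_inv mulrA.
  rewrite sum_seq_pred1; last exact: S_uniq.
  rewrite cf_perm // sgnV.
  rewrite mulrAC sgn_sq mul1r.
  over.
have [c0|cn0] := eqVneq (f@_(tau mu)) 0.
  by rewrite c0 big1 // => w _; case: ifP.
have mu_inj : injective mu.
  move=> i j he; apply/eqP; apply: contraT => hij.
  by move: cn0; rewrite (cf_rep hf hij he) eqxx.
transitivity (\sum_(w : 'S_n) (sdb (comp mu (w^-1)%g))%:R * f@_(tau mu)).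
  rewrite -mulr_suml (reindex_inj invg_inj) /=.
  under eq_bigr do rewrite invgK.
  by rewrite sort_sum // mul1r.
apply: eq_bigr => w _; rewrite memS.
have -> : tau (comp mu (w^-1)%g) \in msupp f.
  by rewrite -mcoeff_neq0 cf_perm // mulf_neq0 // /sgn signr_eq0.
by case: (sdb _); rewrite ?mul1r ?mul0r.
Qed.

End Span.


Lemma om_sum (s : seq E) (c : E -> C) :
  om (\sum_(k <- s) c k *: uhat C hN k) = \sum_(k <- s) c k *: om (uhat C hN k).
Proof.
have msum : forall (K : choiceType) (F : E -> {malg C[K]}) (y : K),
    (\sum_(k <- s) F k)@_y = \sum_(k <- s) (F k)@_y.
  move=> K F y; elim: (s) => [|k s' IH]; first by rewrite !big_nil mcoeff0.
  by rewrite !big_cons mcoeffD IH.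
apply/malgP => mu; rewrite om_coef !msum.
apply: eq_bigr => k _; by rewrite !mcoeffZ om_coef.
Qed.

Lemma inF_sum (s : seq E) (c : E -> C) : inF (\sum_(k <- s) c k *: uhat C hN k).
Proof.
elim: s => [|k s IH]; first by rewrite big_nil; exact: inF0.
rewrite big_cons; exact: (inF_lin (c k) (uhat_inF k) IH).
Qed.

Lemma omega_om (omega : V -> L)
  (omega_linear : forall (c : C) (f g : V), inF f -> inF g ->
      omega (c *: f + g) = c *: omega f + omega g)
  (omega_basis : forall k : {ffun 'I_n -> int}, strictly_decr k ->
      omega (uhat C hN k) = ahat C k) (f : V) :
  inF f -> omega f = om f.
Proof.
move=> hf.
have om0 : omega 0 = 0.
  have h := omega_linear 1 0 0 inF0 inF0.
  rewrite scaler0 addr0 scale1r in h.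
  by apply: (@addrI _ (omega 0)); rewrite addr0 -h.
have hsum : forall (s : seq E) (c : E -> C), all sdb s ->
    omega (\sum_(k <- s) c k *: uhat C hN k) = \sum_(k <- s) c k *: ahat C k.
  move=> s c; elim: s => [|k s IH]; first by rewrite !big_nil.
  move=> /andP [hk hs]; rewrite !big_cons.
  rewrite (omega_linear (c k) _ _ (uhat_inF k) (inF_sum s c)).
  by rewrite (IH hs) (omega_basis k (sdbP hk)).
have e := span hf.
have -> : omega f = omega (\sum_(k <- S f) f@_(tau k) *: uhat C hN k) by rewrite -e.
have -> : om f = om (\sum_(k <- S f) f@_(tau k) *: uhat C hN k) by rewrite -e.
rewrite (hsum _ _ (S_sdb f)) om_sum.
by apply: eq_bigr => k _; rewrite om_uhat.
Qed.

End TVsec.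
End Gen.

Theorem lemma4 (C : numClosedFieldType) (N n b : nat)
  (hN : (0 < N)%N) (hn : (0 < n)%N) (hb : (0 < b)%N)
  (omega : TV C N n -> LP C n)
  (omega_linear : forall (c : C) (f g : TV C N n), inF f -> inF g ->
      omega (c *: f + g) = c *: omega f + omega g)
  (omega_basis : forall k : {ffun 'I_n -> int}, strictly_decr k ->
      omega (uhat C hN k) = ahat C k) :
  forall f g : TV C N n, inF f -> inF g ->
    sp_z b f g = sp_x b N (omega f) (omega g).
Proof.
move=> f g hf hg.
rewrite (omega_om omega_linear omega_basis hf) (omega_om omega_linear omega_basis hg).
exact: sp_main.
Qed.
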